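(* Let $(L,T,U,\bar e)$ be a feasible basis structure of an instance of the budget-constrained minimum cost flow problem, with node potentials $\pi,\mu$, and let $e$ be an entering edge (i.e. $e\in L$ with $d_e<0$, or $e\in U$ with $d_e>0$). Then the tuple $(L',T',U',\bar e')$ resulting from a simplex pivot with entering edge $e$ (and any choice of leaving edge) is again a feasible basis structure; in particular $b(C'(\bar e'))\ne 0$, where $C'(\bar e')$ is the cycle closed by $\bar e'$ with $T'$.
   Context: Problem: directed multigraph $G=(V,E)$, capacities $u_e\in\mathbb{N}_{\ge0}$, costs $c_e\in\mathbb{Z}$, usage fees $b_e\in\mathbb{N}_{\ge0}$, budget $B\in\mathbb{N}_{\ge0}$. A feasible flow is $x\in\mathbb{R}^E$ with flow conservation $\sum_{e\in\delta^-(v)}x_e=\sum_{e\in\delta^+(v)}x_e$ at every node and $0\le x\le u$; $c(x)=\sum_e c_ex_e$, $b(x)=\sum_e b_ex_e$; one minimizes $c(x)$ subject to $b(x)\le B$. Basis structure: tuple $(L,T,U,\bar e)$, $\bar e\in E$, $L,T,U$ a partition of $E\setminus\{\bar e\}$, $T$ a spanning tree of the underlying undirected graph. For $f\notin T$, $C(f)$ is the unique cycle in $T\cup\{f\}$ oriented along $f$, with forward edges $C^+(f)$ and backward edges $C^-(f)$; $b(C(f))=\sum_{C^+(f)}b-\sum_{C^-(f)}b$; $\chi(C)\in\{0,\pm1\}^E$ is $+1$ on $C^+$, $-1$ on $C^-$, $0$ elsewhere. It is required that $b(C(\bar e))\ne0$. The basic solution is the unique $x$ with flow conservation, $x=0$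 on $L$, $x=u$ on $U$, $b(x)=B$; the basis structure is feasible if $0\le x\le u$ (then $x$ is the basic feasible flow). Node potentials: for a fixed root $v_r$, $\pi,\mu:V\to\mathbb{R}$ are the unique functions with $\pi_{v_r}=\mu_{v_r}=0$ and $c^\pi_g:=c_g-\pi_v+\pi_w=0$, $b^\mu_g:=b_g-\mu_v+\mu_w=0$ for all $g=(v,w)\in T$ (reduced costs $c^\pi$, $b^\mu$ are defined this way for all edges). Define $d_g:=c^\pi_g-c^\pi_{\bar e}\, b^\mu_g/b^\mu_{\bar e}$. Simplex pivot: given feasible $(L,T,U,\bar e)$ with basic feasible flow $x$ and entering edge $e$, put $\sigma=1$ if $e\in L$, $\sigma=-1$ if $e\in U$, $\theta=\sigma(\chi(C(e))-\frac{b^\mu_e}{b^\mu_{\bar e}}\chi(C(\bar e)))$; for $f\in E$ let $\delta_f=-x_f/\theta_f$ if $\theta_f<0$, $(u_f-x_f)/\theta_f$ if $\theta_f>0$, $+\infty$ otherwise; $\delta=\min_f\delta_f$, $x'=x+\delta\theta$. A leaving edge is any $e'$ with $\delta_{e'}=\delta$ (so $x'_{e'}\in\{0,u_{e'}\}$). New tuple: if $e'=e$, move $e$ from its set ($L$ or $U$) to the other one; if $e'=\bar e$, set $T'=T$, $\bar e'=e$, remove $e$ from $L$ or $U$, and put $\bar e$ into $L'$ if $x'_{\bar e}=0$, into $U'$ otherwise; else remove $e$ from $L$ or $U$, put $e'$ into $L'$ if $x'_{e'}=0$ and into $U'$ otherwise, and set $T'=T\cup\{e\}\setminus\{e'\}$,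 $\bar e'=\bar e$ if this is a spanning tree, and otherwise $T'=T\cup\{\bar e\}\setminus\{e'\}$, $\bar e'=e$. *)

(* Defs.v *)
From HB Require Import structures.
From mathcomp Require Import all_boot all_order all_algebra.
From Stdlib Require Import ClassicalEpsilon.
Set Implicit Arguments. Unset Strict Implicit. Unset Printing Implicit Defensive.
Import Order.TTheory GRing.Theory Num.Theory.
Local Open Scope ring_scope.

Record mcf (V E : finType) := MCF {
  src : E -> V;
  tgt : E -> V;
  cap : E -> nat;
  cost : E -> int;
  fee : E -> nat;
  budget : nat
}.

Section Defs.
Variables (R : realFieldType) (V E : finType) (G : mcf V E).

Definition uadj (T : {set E}) : rel V :=
  fun v w => [exists g in T, ((src G g == v) && (tgt G g == w))
                          || ((src G g == w) && (tgt G g == v))].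

Definition spanning_tree (T : {set E}) : bool :=
  [forall v, forall w, connect (uadj T) v w] && (#|T|.+1 == #|V|).

(* Oriented traversal of an edge: (g, true) forward, (g, false) backward. *)
Definition ostart (p : E * bool) : V := if p.2 then src G p.1 else tgt G p.1.
Definition ostop (p : E * bool) : V := if p.2 then tgt G p.1 else src G p.1.

(* s is the (simple) cycle in T \cup {f}, oriented along f, listed starting
   with f traversed forward. *)
Definition is_fcycle (T : {set E}) (f : E) (s : seq (E * bool)) : Prop :=
  [/\ ohead s = Some (f, true),
      all (fun p => p.1 \in f |: T) s,
      uniq (map fst s),
      uniq (map ostart s) &
      cycle (fun p q => ostop p == ostart q) s].

(* C(f): the unique such cycle (chosen by classical choice). *)
Definition fcycle (T : {set E}) (f : E) : seq (E * bool) :=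
  epsilon (inhabits [::]) (is_fcycle T f).

Definition chi (T : {set E}) (f : E) (g : E) : R :=
  if (g, true) \in fcycle T f then 1
  else if (g, false) \in fcycle T f then -1 else 0.

Definition bcyc (T : {set E}) (f : E) : R :=
  \sum_(g : E) (fee G g)%:R * chi T f g.

Definition conservation (x : E -> R) : Prop :=
  forall v : V, \sum_(g | tgt G g == v) x g = \sum_(g | src G g == v) x g.

Definition is_basic (L U : {set E}) (x : E -> R) : Prop :=
  [/\ conservation x,
      forall g, g \in L -> x g = 0,
      forall g, g \in U -> x g = (cap G g)%:R &
      \sum_(g : E) (fee G g)%:R * x g = (budget G)%:R].

(* the basic solution (unique for a basis structure) *)
Definition basic_sol (L U : {set E}) : E -> R :=
  epsilon (inhabits (fun _ => 0)) (is_basic L U).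

Definition is_bs (L T U : {set E}) (eb : E) : Prop :=
  [/\ [&& [disjoint L & T], [disjoint L & U] & [disjoint T & U]],
      L :|: T :|: U = [set~ eb],
      spanning_tree T &
      bcyc T eb != 0].

Definition feasible_bs (L T U : {set E}) (eb : E) : Prop :=
  is_bs L T U eb /\
  (forall g, 0 <= basic_sol L U g <= (cap G g)%:R).

Definition feasible_bs_t (S : {set E} * {set E} * {set E} * E) : Prop :=
  let: (L, T, U, eb) := S in feasible_bs L T U eb.

Definition reduced (w : E -> R) (p : V -> R) (g : E) : R :=
  w g - p (src G g) + p (tgt G g).

Definition is_potential (w : E -> R) (T : {set E}) (vr : V) (p : V -> R) : Prop :=
  p vr = 0 /\ forall g, g \in T -> reduced w p g = 0.

Definition costR (g : E) : R := (cost G g)%:~R.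
Definition feeR (g : E) : R := (fee G g)%:R.

Definition dval (eb : E) (pi mu : V -> R) (g : E) : R :=
  reduced costR pi g - reduced costR pi eb * reduced feeR mu g / reduced feeR mu eb.

Definition theta (L T : {set E}) (eb : E) (mu : V -> R) (e : E) (g : E) : R :=
  (if e \in L then 1 else -1) *
  (chi T e g - reduced feeR mu e / reduced feeR mu eb * chi T eb g).

(* delta_g, with None standing for +infinity *)
Definition step (x th : E -> R) (g : E) : option R :=
  if th g < 0 then Some (- x g / th g)
  else if th g > 0 then Some (((cap G g)%:R - x g) / th g)
  else None.

Definition is_leaving (x th : E -> R) (e' : E) (d : R) : Prop :=
  step x th e' = Some d /\
  forall g, if step x th g is Some d' then d <= d' else true.

Definition pivot (L T U : {set E}) (eb e e' : E) (x' : E -> R)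
  : {set E} * {set E} * {set E} * E :=
  if e' == e then
    (if e \in L then (L :\ e, T, e |: U, eb) else (e |: L, T, U :\ e, eb))
  else if e' == eb then
    (if x' eb == 0 then (eb |: (L :\ e), T, U :\ e, e)
     else (L :\ e, T, eb |: (U :\ e), e))
  else
    let L' := if x' e' == 0 then e' |: (L :\ e) else L :\ e in
    let U' := if x' e' == 0 then U :\ e else e' |: (U :\ e) in
    let T1 := (e |: T) :\ e' in
    if spanning_tree T1 then (L', T1, U', eb)
    else (L', (eb |: T) :\ e', U', e).

End Defs.

(* Main.v *)
Require Import Defs.
From HB Require Import structures.
From mathcomp Require Import all_boot all_order all_algebra.
From Stdlib Require Import ClassicalEpsilon.
From mathcomp Require Import ring lra.
Import Order.TTheory GRing.Theory Num.Theory.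
Set Implicit Arguments. Unset Strict Implicit. Unset Printing Implicit Defensive.
Local Open Scope ring_scope.

Section Graph.
Variables (R : realFieldType) (V E : finType) (G : mcf V E).

Lemma uadj_sym T : symmetric (uadj G T).
Proof. by move=> v w; apply/eq_existsb => g; rewrite [X in _ && X]orbC. Qed.

Definition orel (p q : E * bool) := ostop G p == ostart G q.

Definition oe (T : {set E}) (f : E) (u w : V) : E * bool :=
  if [pick g in T | (src G g == u) && (tgt G g == w)] is Some g then (g, true)
  else if [pick g in T | (src G g == w) && (tgt G g == u)] is Some g then (g, false)
  else (f, true).

Lemma oeP T f u w : uadj G T u w ->
  [/\ (oe T f u w).1 \in T, ostart G (oe T f u w) = u & ostop G (oe T f u w) = w].
Proof.
move=> /existsP[g /andP[gT Hg]]; rewrite /oe.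
case: pickP => [h /andP[hT /andP[/eqP hs /eqP ht]]|H1].
  by rewrite /ostart /ostop /= hs ht.
case: pickP => [h /andP[hT /andP[/eqP hs /eqP ht]]|H2].
  by rewrite /ostart /ostop /= hs ht.
exfalso; case/orP: Hg => /andP[/eqP a /eqP b].
  by move: (H1 g); rewrite gT a b !eqxx.
by move: (H2 g); rewrite gT a b !eqxx.
Qed.

Lemma ends_src q : src G q.1 \in [:: ostart G q; ostop G q].
Proof. by case: q => g [] /=; rewrite /ostart /ostop /= !inE eqxx ?orbT. Qed.
Lemma ends_tgt q : tgt G q.1 \in [:: ostart G q; ostop G q].
Proof. by case: q => g [] /=; rewrite /ostart /ostop /= !inE eqxx ?orbT. Qed.
Lemma start_ends q : ostart G q \in [:: src G q.1; tgt G q.1].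
Proof. by case: q => g [] /=; rewrite /ostart /ostop /= !inE eqxx ?orbT. Qed.
Lemma stop_ends q : ostop G q \in [:: src G q.1; tgt G q.1].
Proof. by case: q => g [] /=; rewrite /ostart /ostop /= !inE eqxx ?orbT. Qed.

Lemma pairmap_ends T f x p : path (uadj G T) x p ->
  [/\ map (ostart G) (pairmap (oe T f) x p) = belast x p,
      map (ostop G) (pairmap (oe T f) x p) = p &
      all (fun q => q.1 \in T) (pairmap (oe T f) x p)].
Proof.
elim: p x => [|y p IH] x //= /andP[hxy hp].
have [a b c] := oeP f hxy; have [a' b' c'] := IH _ hp.
by rewrite b c a a' b' c'.
Qed.

Lemma pairmap_path T f x p q0 : ostop G q0 = x -> path (uadj G T) x p ->
  path orel q0 (pairmap (oe T f) x p) /\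
  ostop G (last q0 (pairmap (oe T f) x p)) = last x p.
Proof.
elim: p x q0 => [|y p IH] x q0 //= hq /andP[hxy hp].
have [a b c] := oeP f hxy; have [a' b'] := IH _ (oe T f x y) c hp.
by rewrite a' b' /orel hq b eqxx.
Qed.

Lemma pairmap_uniq T f x p : path (uadj G T) x p -> uniq (x :: p) ->
  uniq (map fst (pairmap (oe T f) x p)).
Proof.
elim: p x => [|y p IH] x //= /andP[hxy hp] /andP[hx hu].
rewrite IH // andbT; apply/mapP => -[q qin qe].
have [a b c] := oeP f hxy.
have [a' b' _] := pairmap_ends f hp.
have qs : ostart G q \in y :: p.
  by apply: mem_belast; rewrite -a'; apply: map_f.
have qt : ostop G q \in p by rewrite -b'; apply: map_f.
have H1 : forall v, v \in [:: src G q.1; tgt G q.1] -> v \in [:: x; y].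
  move=> v; rewrite -qe !inE => /orP[] /eqP ->.
    by have := ends_src (oe T f x y); rewrite b c !inE.
  by have := ends_tgt (oe T f x y); rewrite b c !inE.
have := H1 _ (start_ends q); have := H1 _ (stop_ends q).
rewrite !inE => /orP[/eqP e1|/eqP e1].
  by move: hx; rewrite inE negb_or -e1 qt andbF.
move=> _; move: hu; rewrite -e1 qt //.
Qed.


Lemma fcycle_exists T f : spanning_tree G T -> f \notin T -> exists s, is_fcycle G T f s.
Proof.
move=> /andP[/forallP hc _] fT.
have := hc (tgt G f) => /forallP /(_ (src G f)) /connectP[p hp hl].
move: hl; case: (shortenP hp) => p' hp' hu _ hl.
exists ((f, true) :: pairmap (oe T f) (tgt G f) p').
have [a b c] := pairmap_ends f hp'.
split => //=.
- rewrite !inE eqxx /=; apply/allP => q qin; rewrite !inE.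
  by move/allP: c => /(_ q qin) ->; rewrite orbT.
- rewrite pairmap_uniq // andbT; apply/mapP => -[q qin qe].
  move/allP: c => /(_ q qin); rewrite -qe /= => fT'.
  by rewrite fT' in fT.
- rewrite a; have := hu; rewrite lastI -hl rcons_uniq; case/andP=> h1 h2.
  by rewrite /ostart /= h1 h2.
- rewrite rcons_path; have [h1 h2] := @pairmap_path T f (tgt G f) p' (f, true) erefl hp'.
  by rewrite h1 /= h2 -hl /ostart /= eqxx.
Qed.

Lemma fcycle_spec T f : spanning_tree G T -> f \notin T -> is_fcycle G T f (Defs.fcycle G T f).
Proof. by move=> hT fT; apply: epsilon_spec; apply: fcycle_exists. Qed.


Definition sgn (p : E * bool) : R := if p.2 then 1 else -1.

Lemma chi_sum_gen (s : seq (E * bool)) g : uniq (map fst s) ->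
  (if (g, true) \in s then 1 else if (g, false) \in s then -1 else 0 : R)
  = \sum_(p <- s) (p.1 == g)%:R * sgn p.
Proof.
elim: s => [|[h bq] s IH] /=; first by rewrite big_nil.
move=> /andP[hs hu]; rewrite big_cons /= -IH // !inE.
have [hg|hg] := eqVneq h g.
  subst h; have nin : forall b, (g, b) \in s = false.
    by move=> b; apply/negbTE; apply: contra hs => H; apply/mapP; exists (g, b).
  rewrite !nin !orbF /sgn /=; case: bq => /=; rewrite ?eqxx /=.
    by rewrite mul1r addr0.
  by rewrite xpair_eqE eqxx /= mul1r addr0.
have ne : forall b, ((g, b) == (h, bq)) = false.
  by move=> b; apply/negbTE; apply: contra hg => /eqP [->].
by rewrite !ne /= mul0r add0r.
Qed.

Lemma path_map_stop q t : path orel q t -> map (ostop G) (belast q t) = map (ostart G) t.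
Proof.
elim: t q => [|r t IH] q //= /andP[/eqP h hp].
by rewrite h IH.
Qed.

Lemma cycle_stops s v : cycle orel s ->
  \sum_(p <- s) ((ostop G p == v)%:R : R) = \sum_(p <- s) ((ostart G p == v)%:R : R).
Proof.
case: s => [|q s] hc; first by rewrite !big_nil.
have := path_map_stop hc; rewrite belast_rcons => hm.
rewrite -(big_map (ostop G) xpredT (fun w => (w == v)%:R)) -/(map (ostop G) (q :: s)).
rewrite hm big_map (perm_big (q :: s)) ?perm_rcons //.
Qed.


Section Tree.
Variables (T : {set E}) (f : E).
Hypotheses (hT : spanning_tree G T) (fT : f \notin T).

Local Notation s := (Defs.fcycle G T f).

Lemma chi_f : chi R G T f f = 1.
Proof.
have [h1 _ _ _ _] := fcycle_spec hT fT; move: h1; rewrite /chi.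
by case: s => //= q s' [->]; rewrite inE eqxx.
Qed.

Lemma chi_out g : g \notin f |: T -> chi R G T f g = 0.
Proof.
have [_ h2 _ _ _] := fcycle_spec hT fT; move=> gn; rewrite /chi.
have nin b : (g, b) \in s = false.
  apply/negbTE; apply: contra gn => hin; exact: (allP h2 _ hin).
by rewrite !nin.
Qed.

Lemma chi_nz g : chi R G T f g != 0 -> g \in f |: T.
Proof. by apply: contraR => /chi_out ->; rewrite eqxx. Qed.

Lemma chi_circ : conservation G (chi R G T f).
Proof.
have [_ _ hu _ hc] := fcycle_spec hT fT.
have ce g : chi R G T f g = \sum_(p <- s) (p.1 == g)%:R * sgn p.
  by rewrite /chi chi_sum_gen.
move=> v.
have key (sel : E -> V) : \sum_(g | sel g == v) chi R G T f g
   = \sum_(p <- s) (sel p.1 == v)%:R * sgn p.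
  under eq_bigr do rewrite ce.
  rewrite exchange_big /=; apply: eq_bigr => p _.
  rewrite big_mkcond (bigD1 p.1) //= eqxx mul1r big1 ?addr0.
    by case: (sel p.1 == v); rewrite ?mul1r ?mul0r.
  by move=> g /negbTE; rewrite eq_sym => ->; rewrite mul0r; case: ifP.
rewrite !key; apply/eqP; rewrite -subr_eq0 -sumrB.
have -> : \sum_(p <- s) ((tgt G p.1 == v)%:R * sgn p - (src G p.1 == v)%:R * sgn p)
   = \sum_(p <- s) ((ostop G p == v)%:R - (ostart G p == v)%:R).
  apply: eq_bigr => -[g []] _; rewrite /sgn /ostop /ostart /=; first by rewrite !mulr1.
  by rewrite !mulrN1 opprK addrC.
by rewrite sumrB (cycle_stops _ hc) subrr.
Qed.

End Tree.


Section Mx.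
Variable (T : {set E}).
Hypothesis hT : spanning_tree G T.

Definition dv (g : E) (v : V) : R := (tgt G g == v)%:R - (src G g == v)%:R.
Definition Mx : 'M[R]_(#|T|, #|V|) := \matrix_(i, j) dv (enum_val i) (enum_val j).
Definition del (v : V) : 'rV[R]_#|V| := delta_mx 0 (enum_rank v).

Lemma enum_val_eq (j : 'I_#|V|) w : (enum_val j == w) = (j == enum_rank w).
Proof. by apply/eqP/eqP => [<-|->]; [rewrite enum_valK | rewrite enum_rankK]. Qed.

Lemma row_Mx i : row i Mx = del (tgt G (enum_val i)) - del (src G (enum_val i)).
Proof.
by apply/rowP => j; rewrite !mxE /dv !(eq_sym _ (enum_val j)) !enum_val_eq.
Qed.

Lemma step_sub u w : uadj G T u w -> (del w - del u <= Mx)%MS.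
Proof.
move=> /existsP[g /andP[gT Hg]].
have hr := row_Mx (enum_rank_in gT g); rewrite enum_rankK_in // in hr.
case/orP: Hg => /andP[/eqP a /eqP b].
  by rewrite -a -b -hr row_sub.
have -> : del w - del u = - (del u - del w) by rewrite opprB.
by rewrite (eqmx_opp (del u - del w)) -a -b -hr row_sub.
Qed.

Lemma path_sub a p : path (uadj G T) a p -> (del (last a p) - del a <= Mx)%MS.
Proof.
elim: p a => [|y p IH] a /=; first by rewrite subrr sub0mx.
move=> /andP[hy hp].
have -> : del (last y p) - del a = (del (last y p) - del y) + (del y - del a).
  by rewrite addrA subrK.
by rewrite addmx_sub ?IH ?step_sub.
Qed.

Lemma Mx_free : row_free Mx.
Proof.
move: hT => /andP[/forallP hc /eqP hcard].
case: (pickP (@predT V)) => [v0 _|H]; last first.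
  by rewrite (eq_card0 H) in hcard.
set D : 'M[R]_#|V| := \matrix_(j, k) (del (enum_val j) - del v0) 0 k.
have DM : (D <= Mx)%MS.
  apply/row_subP => j.
  have -> : row j D = del (enum_val j) - del v0.
    by apply/rowP => k; rewrite !mxE.
  have := hc v0 => /forallP /(_ (enum_val j)) /connectP[p hp ->].
  exact: path_sub.
set C : 'M[R]_(#|V|, 1) := const_mx 1.
have h1 : (1%:M : 'M[R]_#|V|) = D + C *m del v0.
  apply/matrixP => j k; rewrite !mxE big_ord1 !mxE mul1r.
  rewrite (_ : (j == k) = (k == enum_rank (enum_val j))) ?addrNK //.
  by rewrite enum_valK eq_sym.
have := mxrank1 R #|V|; rewrite h1 => hr.
have r1 : (\rank (C *m del v0 : 'M[R]_#|V|) <= 1)%N.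
  exact: leq_trans (mxrankM_maxr _ _) (rank_leq_row _).
have := mxrank_add D (C *m del v0); rewrite hr => hr2.
have rD := mxrankS DM.
rewrite /row_free eqn_leq rank_leq_row /=.
rewrite -ltnS hcard; apply: leq_trans hr2 _.
by rewrite -(addn1 (\rank Mx)) leq_add.
Qed.

Lemma tree_circ0 (z : E -> R) : conservation G z -> (forall g, g \notin T -> z g = 0) ->
  forall g, z g = 0.
Proof.
move=> hz hout.
set u : 'rV[R]_#|T| := \row_i z (enum_val i).
have u0 : u *m Mx = 0.
  apply/rowP => j; rewrite !mxE.
  under eq_bigr do rewrite !mxE.
  rewrite -(big_enum_val (fun g => z g * dv g (enum_val j))) /=.
  have -> : \sum_(g in T) z g * dv g (enum_val j) = \sum_g z g * dv g (enum_val j).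
    rewrite [RHS](bigID (fun g => g \in T)) /= [X in _ = _ + X]big1 ?addr0 //.
    by move=> g /hout ->; rewrite mul0r.
  under eq_bigr do rewrite mulrBr.
  rewrite sumrB.
  have sel (P : E -> bool) : \sum_g z g * (P g)%:R = \sum_(g | P g) z g.
    by rewrite [RHS]big_mkcond; apply: eq_bigr => g _; case: (P g); rewrite ?mulr1 ?mulr0.
  by rewrite !sel hz subrr.
have : u = 0 by apply: (row_free_inj Mx_free); rewrite mul0mx.
move=> {}u0 g; case: (boolP (g \in T)) => [gT|]; last exact: hout.
by move/rowP: u0 => /(_ (enum_rank_in gT g)); rewrite !mxE enum_rankK_in.
Qed.

End Mx.


Lemma uadj_orient (T : {set E}) (r : E * bool) : r.1 \in T -> uadj G T (ostart G r) (ostop G r).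
Proof.
move=> hr; apply/existsP; exists r.1; rewrite hr /=.
by case: r hr => h [] _; rewrite /ostart /ostop /= !eqxx ?orbT.
Qed.

Lemma opath_connect (T : {set E}) q t : path orel q t -> all (fun p => p.1 \in T) t ->
  connect (uadj G T) (ostop G q) (ostop G (last q t)).
Proof.
elim: t q => [|r t IH] q /=; first by rewrite connect0.
move=> /andP[/eqP h hp] /andP[hr ht].
apply: connect_trans (IH _ hp ht).
by rewrite h; apply: connect1; apply: uadj_orient.
Qed.

Lemma exchange T a g : spanning_tree G T -> a \notin T -> g \in T ->
  chi R G T a g != 0 -> spanning_tree G ((a |: T) :\ g).
Proof.
move=> hT aT gT hchi.
set T' := (a |: T) :\ g.
have [_ h2 h3 _ h5] := fcycle_spec hT aT.
have [b hb] : exists b, (g, b) \in Defs.fcycle G T a.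
  move: hchi; rewrite /chi; case: ifP => [h _|_]; first by exists true.
  by case: ifP => [h _|_]; [exists false | rewrite eqxx].
case: (rot_to hb) => i s' hrot.
have hc : cycle orel ((g, b) :: s') by rewrite -hrot rot_cycle.
have hu : uniq (map fst ((g, b) :: s')) by rewrite -hrot map_rot rot_uniq.
have ha : all (fun p => p.1 \in T') s'.
  apply/allP => p ps; rewrite !inE.
  have pin : p \in Defs.fcycle G T a by rewrite -(mem_rot i) hrot inE ps orbT.
  move: hu => /= /andP[hg _].
  have -> : p.1 != g by apply: contraNneq hg => <-; apply: map_f.
  by move/allP: h2 => /(_ p pin); rewrite !inE.
have c1 : connect (uadj G T') (ostop G (g, b)) (ostart G (g, b)).
  move: hc; rewrite /= rcons_path => /andP[hp /eqP hl].
  by rewrite -hl; apply: opath_connect.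
have csym := sym_connect_sym (uadj_sym T').
have c2 : connect (uadj G T') (src G g) (tgt G g) && connect (uadj G T') (tgt G g) (src G g).
  by move: c1; rewrite /ostop /ostart; case: b {hb hrot hc hu} => /= c1; rewrite c1 csym c1.
case/andP: c2 => c2 c3.
have step x y : uadj G T x y -> connect (uadj G T') x y.
  move=> /existsP[h /andP[hT' Hh]].
  have [hg|hg] := eqVneq h g.
    by subst h; case/orP: Hh => /andP[/eqP <- /eqP <-].
  apply: connect1; apply/existsP; exists h; rewrite !inE hg hT' orbT /=.
  exact: Hh.
have pth x p : path (uadj G T) x p -> connect (uadj G T') x (last x p).
  elim: p x => [|y p IH] x /=; first by rewrite connect0.
  by move=> /andP[hxy hp]; apply: connect_trans (step _ _ hxy) (IH _ hp).
move: hT => /andP[/forallP hcon /eqP hcard].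
apply/andP; split.
  apply/forallP => v; apply/forallP => w.
  by move: (hcon v) => /forallP /(_ w) /connectP[p hp ->]; apply: pth.
have hD := cardsD1 g (a |: T).
have hg : g \in a |: T by rewrite !inE gT orbT.
rewrite hg cardsU1 aT /= !add1n in hD; case: hD => <-.
by rewrite hcard.
Qed.


Lemma flow_pot (sel : E -> V) (x : E -> R) (p : V -> R) :
  \sum_g p (sel g) * x g = \sum_v p v * \sum_(g | sel g == v) x g.
Proof.
rewrite (partition_big sel xpredT) //=; apply: eq_bigr => v _; rewrite mulr_sumr.
by apply: eq_big => [g|g /eqP ->] //.
Qed.

Lemma pot_circ (x : E -> R) (p : V -> R) : conservation G x ->
  \sum_g (p (tgt G g) - p (src G g)) * x g = 0.
Proof.
move=> hx; under eq_bigr do rewrite mulrBl.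
rewrite sumrB !flow_pot; under eq_bigr do rewrite hx.
by rewrite subrr.
Qed.

Lemma circD (a b : E -> R) : conservation G a -> conservation G b ->
  conservation G (fun h => a h + b h).
Proof. by move=> ha hb v; rewrite !big_split /= ha hb. Qed.

Lemma circZ (c : R) (a : E -> R) : conservation G a -> conservation G (fun h => c * a h).
Proof. by move=> ha v; rewrite -!mulr_sumr ha. Qed.

Lemma circN (a : E -> R) : conservation G a -> conservation G (fun h => - a h).
Proof. by move=> ha v; rewrite !sumrN ha. Qed.

Lemma circS (P : pred E) (F : E -> E -> R) : (forall g, P g -> conservation G (F g)) ->
  conservation G (fun h => \sum_(g | P g) F g h).
Proof.
move=> hF v; rewrite exchange_big [RHS]exchange_big /=.
by apply: eq_bigr => g Pg; apply: hF.
Qed.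

Section Tree2.
Variables (T : {set E}).
Hypothesis hT : spanning_tree G T.

Lemma wsum_chi (f : E) (w : E -> R) (p : V -> R) : f \notin T ->
  (forall g, g \in T -> reduced G w p g = 0) ->
  \sum_g w g * chi R G T f g = reduced G w p f.
Proof.
move=> fT hp.
have -> : \sum_g w g * chi R G T f g = \sum_g reduced G w p g * chi R G T f g.
  have H := pot_circ p (chi_circ hT fT).
  apply/eqP; rewrite eq_sym -subr_eq0 -[X in _ == X]H -sumrB; apply/eqP.
  by apply: eq_bigr => g _; rewrite /reduced; ring.
rewrite (bigD1 f) //= chi_f // mulr1 big1 ?addr0 // => g gf.
case: (boolP (g \in T)) => [gT|gT]; first by rewrite hp // mul0r.
by rewrite chi_out ?mulr0 // !inE negb_or gf gT.
Qed.

Lemma decomp1 (a : E) (z : E -> R) : a \notin T -> conservation G z ->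
  (forall g, g \notin T -> g != a -> z g = 0) ->
  forall g, z g = z a * chi R G T a g.
Proof.
move=> aT hz hout g; apply/eqP; rewrite -subr_eq0; apply/eqP; move: g.
apply: (tree_circ0 hT); first exact: circD hz (circN (circZ _ (chi_circ hT aT))).
move=> g gT; have [->|ga] := eqVneq g a; first by rewrite chi_f // mulr1 subrr.
by rewrite hout // chi_out ?mulr0 ?subr0 // !inE negb_or ga gT.
Qed.

Lemma decomp2 (a c : E) (z : E -> R) : a \notin T -> c \notin T -> a != c ->
  conservation G z ->
  (forall g, g \notin T -> g != a -> g != c -> z g = 0) ->
  forall g, z g = z a * chi R G T a g + z c * chi R G T c g.
Proof.
move=> aT cT ac hz hout g; apply/eqP; rewrite -subr_eq0; apply/eqP; move: g.
apply: (tree_circ0 hT).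
  exact: circD hz (circN (circD (circZ _ (chi_circ hT aT)) (circZ _ (chi_circ hT cT)))).
have ca : c != a by rewrite eq_sym.
move=> g gT; have [->|ga] := eqVneq g a.
  rewrite chi_f // mulr1 (chi_out hT cT) ?mulr0 ?addr0 ?subrr //.
  by rewrite !inE negb_or ac aT.
have [->|gc] := eqVneq g c.
  rewrite chi_f // mulr1 (chi_out hT aT) ?mulr0 ?add0r ?subrr //.
  by rewrite !inE negb_or ca cT.
rewrite hout // (chi_out hT aT) ?(chi_out hT cT) ?mulr0 ?addr0 ?subr0 //.
  by rewrite !inE negb_or gc gT.
by rewrite !inE negb_or ga gT.
Qed.

End Tree2.

Section BS.
Variables (L T U : {set E}) (eb : E).
Hypothesis hbs : is_bs R G L T U eb.

Lemma bs_tree : spanning_tree G T.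
Proof. by case: hbs. Qed.

Lemma bs_mem : [/\ eb \notin L, eb \notin T, eb \notin U,
  forall g, g != eb -> [|| g \in L, g \in T | g \in U] &
  [/\ forall g, g \in L -> g \notin T, forall g, g \in L -> g \notin U &
      forall g, g \in T -> g \notin U]].
Proof.
case: hbs => /and3P[d1 d2 d3] hu _ _.
have mU g : (g \in L) || (g \in T) || (g \in U) = (g != eb).
  by rewrite -!in_setU hu !inE.
have := mU eb; rewrite eqxx => /negbT; rewrite !negb_or => /andP[/andP[h1 h2] h3].
split => //.
- by move=> g; rewrite -mU orbA.
split => g H.
- by rewrite (disjointFr d1 H).
- by rewrite (disjointFr d2 H).
- by rewrite (disjointFr d3 H).
Qed.

Lemma basic_exists : exists x : E -> R, is_basic G L U x.
Proof.
have hT := bs_tree.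
have [ebL ebT ebU _ [dLT dLU dTU]] := bs_mem.
case: hbs => _ _ _ hb.
have dUT g : g \in U -> g \notin T by move=> gU; apply/negP => /dTU; rewrite gU.
set t := ((budget G)%:R - \sum_(g in U) (cap G g)%:R * bcyc R G T g) / bcyc R G T eb.
exists (fun h => \sum_(g in U) (cap G g)%:R * chi R G T g h + t * chi R G T eb h).
split.
- apply: circD; last exact: circZ (chi_circ hT ebT).
  by apply: circS => g gU; apply: circZ; apply: chi_circ => //; apply: dUT.
- move=> h hL.
  have hT' : h \notin T by apply: dLT.
  rewrite big1 ?add0r; last first.
    move=> g gU; rewrite chi_out ?mulr0 //; first exact: dUT.
    rewrite !inE negb_or hT' andbT; apply/eqP => hg; subst h.
    by move: (dLU _ hL); rewrite gU.
  rewrite chi_out ?mulr0 // !inE negb_or hT' andbT.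
  by apply/eqP => hg; subst h; move: ebL; rewrite hL.
- move=> h hU.
  have hT' : h \notin T by apply: dUT.
  rewrite (bigD1 h) //= chi_f ?mulr1 //.
  rewrite big1 ?addr0; last first.
    move=> g /andP[gU gh]; rewrite chi_out ?mulr0 //; first exact: dUT.
    by rewrite !inE negb_or hT' andbT eq_sym.
  rewrite chi_out ?mulr0 ?addr0 // !inE negb_or hT' andbT.
  by apply/eqP => hg; subst h; move: ebU; rewrite hU.
- under eq_bigr do rewrite mulrDr mulr_sumr.
  rewrite big_split /= exchange_big /=.
  have -> : \sum_(g in U) \sum_h (fee G h)%:R * ((cap G g)%:R * chi R G T g h)
      = \sum_(g in U) (cap G g)%:R * bcyc R G T g.
    apply: eq_bigr => g _; rewrite /bcyc mulr_sumr; apply: eq_bigr => h _.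
    by rewrite mulrCA.
  have -> : \sum_h (fee G h)%:R * (t * chi R G T eb h) = t * bcyc R G T eb.
    rewrite /bcyc mulr_sumr; apply: eq_bigr => h _; by rewrite mulrCA.
  by rewrite /t divfK // addrC subrK.
Qed.

Lemma basic_is : is_basic G L U (basic_sol R G L U).
Proof. by apply: epsilon_spec; apply: basic_exists. Qed.

Lemma basic_unique (y : E -> R) : is_basic G L U y -> forall g, basic_sol R G L U g = y g.
Proof.
have hT := bs_tree.
have [ebL ebT ebU hcov [dLT dLU dTU]] := bs_mem.
case: hbs => _ _ _ hb.
case: basic_is => cx Lx Ux bx [cy Ly Uy by'].
set z := fun g => basic_sol R G L U g - y g.
have hz : conservation G z by apply: circD cx (circN cy).
have hd := decomp1 hT ebT hz.
have hd' : forall g, z g = z eb * chi R G T eb g.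
  apply: hd => g gT geb.
  case/or3P: (hcov g geb) => H; last 2 first.
  - by rewrite H in gT.
  - by rewrite /z Ux // Uy // subrr.
  by rewrite /z Lx // Ly // subrr.
have zb : \sum_g (fee G g)%:R * z g = 0.
  by rewrite /z; under eq_bigr do rewrite mulrBr; rewrite sumrB bx by' subrr.
have zeb : z eb = 0.
  move: zb; under eq_bigr do rewrite hd' mulrCA.
  rewrite -mulr_sumr => /eqP; rewrite mulf_eq0 => /orP[/eqP //|].
  by rewrite -/(bcyc R G T eb) (negbTE hb).
by move=> g; apply/eqP; rewrite -subr_eq0; apply/eqP; rewrite -/(z g) hd' zeb mul0r.
Qed.

End BS.

Lemma bcyc_exch (T : {set E}) (a c g : E) : spanning_tree G T -> a \notin T -> c \notin T ->
  a != c -> g \in T -> spanning_tree G ((a |: T) :\ g) ->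
  let al := chi R G ((a |: T) :\ g) c a in
  al * chi R G T a g + chi R G T c g = 0 /\
  bcyc R G ((a |: T) :\ g) c = al * bcyc R G T a + bcyc R G T c.
Proof.
move=> hT aT cT ac gT hT' al.
set T' := (a |: T) :\ g.
have cT' : c \notin T' by rewrite !inE negb_and negb_or cT (eq_sym c a) ac orbT.
have hz := chi_circ hT' cT'.
have hd := decomp2 hT aT cT ac hz.
have hd' : forall h, chi R G T' c h = al * chi R G T a h + chi R G T c h.
  move=> h; rewrite hd; first by rewrite (chi_f hT' cT') mul1r.
  move=> h' h'T h'a h'c; apply: chi_out => //.
  by rewrite !inE negb_or h'c /= negb_and negb_or h'a h'T orbT.
split.
  rewrite -hd' chi_out //; rewrite !inE negb_or negb_and gT negbK eqxx /= andbT.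
  by apply: contraNneq cT => <-.
rewrite /bcyc; under eq_bigr do rewrite hd' mulrDr mulrCA.
by rewrite big_split /= -mulr_sumr.
Qed.

Lemma bs_intro (L' T' U' : {set E}) eb' :
  (forall g, ((g \in L') + (g \in T') + (g \in U') + (g == eb'))%N = 1%N) ->
  spanning_tree G T' -> bcyc R G T' eb' != 0 -> is_bs R G L' T' U' eb'.
Proof.
move=> H hT hb; split => //.
  apply/and3P; split; rewrite -setI_eq0; apply/eqP/setP => g; rewrite !inE;
  move: (H g); case: (g \in L'); case: (g \in T'); case: (g \in U'); case: (g == eb') => //.
apply/setP => g; rewrite !inE; move: (H g).
by case: (g \in L'); case: (g \in T'); case: (g \in U'); case: (g == eb').
Qed.

Lemma bs_cnt L T U eb : is_bs R G L T U eb ->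
  forall g, ((g \in L) + (g \in T) + (g \in U) + (g == eb))%N = 1%N.
Proof.
move=> hbs g; have [ebL ebT ebU hcov [dLT dLU dTU]] := bs_mem hbs.
have [->|ge] := eqVneq g eb; first by rewrite (negbTE ebL) (negbTE ebT) (negbTE ebU).
case/or3P: (hcov g ge) => H.
- by rewrite H (negbTE (dLT _ H)) (negbTE (dLU _ H)).
- rewrite H (negbTE (dTU _ H)); case: (boolP (g \in L)) => // /dLT; by rewrite H.
- rewrite H; case: (boolP (g \in L)) => [/dLU|_]; first by rewrite H.
  by case: (boolP (g \in T)) => // /dTU; rewrite H.
Qed.

Lemma leave_facts (x th : E -> R) e' d : (forall g, 0 <= x g <= (cap G g)%:R) ->
  is_leaving G x th e' d ->
  [/\ th e' != 0, forall g, 0 <= x g + d * th g <= (cap G g)%:R,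
      th e' < 0 -> x e' + d * th e' = 0 &
      0 < th e' -> x e' + d * th e' = (cap G e')%:R].
Proof.
move=> hx [hs hm].
have ne : th e' != 0.
  by move: hs; rewrite /step; case: ltrP => [/ltr0_neq0 //|]; case: ltrP => // /lt0r_neq0.
have [x0 xc] := andP (hx e').
have hd : (th e' < 0 -> d * th e' = - x e') /\ (0 < th e' -> d * th e' = (cap G e')%:R - x e').
  split => h; move: hs; rewrite /step.
    by rewrite h => -[<-]; rewrite divfK.
  by rewrite ltNge (ltW h) /= h => -[<-]; rewrite divfK // gt_eqF.
have d0 : 0 <= d.
  case: (ltrgtP (th e') 0) => h.
  - have := (proj1 hd) h; nra.
  - have := (proj2 hd) h; nra.
  - by move: ne; rewrite h eqxx.
split => //.
- move=> g; have [y0 yc] := andP (hx g); move: (hm g); rewrite /step.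
  case: ltrP => h1.
    move=> hdd; have : d * th g >= - x g.
      by rewrite -[X in X <= _](divfK (ltr0_neq0 h1)) (ler_wnM2r (ltW h1)).
    move=> H2; apply/andP; split; nra.
  case: ltrP => h2.
    move=> hdd; have : d * th g <= (cap G g)%:R - x g.
      by rewrite -[X in _ <= X](divfK (lt0r_neq0 h2)) (ler_wpM2r (ltW h2)).
    move=> H2; apply/andP; split; nra.
  move=> _; have -> : th g = 0 by apply/eqP; rewrite eq_le h1 h2.
  by rewrite mulr0 addr0 y0 yc.
- by move=> h; rewrite (proj1 hd h) subrr.
- by move=> h; rewrite (proj2 hd h) addrC subrK.
Qed.

End Graph.

Unset Implicit Arguments.
Set Strict Implicit.

Lemma circ_ext (R : realFieldType) (V E : finType) (G : mcf V E) (a b : E -> R) :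
  a =1 b -> conservation G a -> conservation G b.
Proof.
move=> hab ha v.
have -> : \sum_(g | tgt G g == v) b g = \sum_(g | tgt G g == v) a g.
  by apply: eq_bigr => g _; rewrite hab.
have -> : \sum_(g | src G g == v) b g = \sum_(g | src G g == v) a g.
  by apply: eq_bigr => g _; rewrite hab.
exact: ha.
Qed.

Theorem lemma1 (R : realFieldType) (V E : finType) (G : mcf V E)
    (L T U : {set E}) (eb : E) (vr : V) (pi mu : V -> R)
    (e e' : E) (d : R) :
  feasible_bs R G L T U eb ->
  is_potential G (costR R G) T vr pi ->
  is_potential G (feeR R G) T vr mu ->
  (e \in L /\ dval G eb pi mu e < 0) \/ (e \in U /\ dval G eb pi mu e > 0) ->
  let x := basic_sol R G L U in
  let th := theta G L T eb mu e in
  is_leaving G x th e' d ->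
  let x' := fun g => x g + d * th g in
  feasible_bs_t R G (pivot G L T U eb e e' x').
Proof.
move=> [hbs hfeas] hpc hpm hent x th hleave x'.
have hT := bs_tree hbs.
have [ebL ebT ebU hcov [dLT dLU dTU]] := bs_mem hbs.
have cnt := bs_cnt hbs.
have [cx Lx Ux bx] : is_basic G L U x := basic_is hbs.
case: (hbs) => _ _ _ hbeb.
have eLU : (e \in L) || (e \in U) by case: hent => -[-> _]; rewrite ?orbT.
have eT : e \notin T.
  by case/orP: eLU => H; [apply: dLT | apply/negP => /dTU; rewrite H].
have eeb : e != eb by apply: contraTneq eLU => ->; rewrite (negbTE ebL) (negbTE ebU).
set be := bcyc R G T e; set bb := bcyc R G T eb.
set sg : R := if e \in L then 1 else -1.
have rb f : f \notin T -> reduced G (feeR R G) mu f = bcyc R G T f.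
  by move=> fT; rewrite -(wsum_chi hT fT (proj2 hpm)).
have thE g : th g = sg * (chi R G T e g - be / bb * chi R G T eb g).
  by rewrite /th /theta !rb.
have sgnz : sg != 0 by rewrite /sg; case: ifP => _; rewrite ?oppr_eq0 oner_eq0.
have cth : conservation G th.
  apply: (@circ_ext _ _ _ G (fun g => sg * (chi R G T e g + - (be / bb * chi R G T eb g))) th).
    by move=> g; rewrite thE.
  exact: (circZ sg (circD (chi_circ R hT eT) (circN (circZ (be / bb) (chi_circ R hT ebT))))).
have bth : \sum_g (fee G g)%:R * th g = 0.
  transitivity (\sum_g (sg * ((fee G g)%:R * chi R G T e g)
      - sg * (be / bb) * ((fee G g)%:R * chi R G T eb g))).
    by apply: eq_bigr => g _; rewrite thE; ring.
  by rewrite sumrB -!mulr_sumr -/be -/bb -mulrA divfK // subrr.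
have [thne xb xneg xpos] := leave_facts hfeas hleave.
have cx' : conservation G x' by apply: circD cx (circZ d cth).
have bx' : \sum_g (fee G g)%:R * x' g = (budget G)%:R.
  rewrite /x'; under eq_bigr do rewrite mulrDr mulrCA.
  by rewrite big_split /= bx -mulr_sumr bth mulr0 addr0.
have thz g : g \notin T -> g != e -> g != eb -> th g = 0.
  move=> gT ge geb; rewrite thE (chi_out R hT eT) ?(chi_out R hT ebT) ?mulr0 ?subr0 ?mulr0 //.
    by rewrite !inE negb_or geb gT.
  by rewrite !inE negb_or ge gT.
have x'z g : g \notin T -> g != e -> g != eb -> x' g = x g.
  by move=> gT ge geb; rewrite /x' thz // mulr0 addr0.
have x'e'01 : x' e' != 0 -> x' e' = (cap G e')%:R.
  move=> h; case: (ltrgtP (th e') 0) => hh.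
  - by move: h; rewrite /x' xneg // eqxx.
  - by rewrite /x' xpos.
  - by move: thne; rewrite hh eqxx.
have fin L' T' U' eb' : is_bs R G L' T' U' eb' -> is_basic G L' U' x' ->
    feasible_bs R G L' T' U' eb'.
  move=> hb' hx'; split => // g; rewrite (basic_unique hb' hx'); exact: xb.
have dUT g : g \in U -> g \notin T by move=> gU; apply/negP => /dTU; rewrite gU.
have gLeb g : g \in L -> g != eb by move=> gL; apply: contraTneq gL => ->.
have gUeb g : g \in U -> g != eb by move=> gU; apply: contraTneq gU => ->.
have chieb : chi R G T eb e = 0 by rewrite (chi_out R hT ebT) // !inE negb_or eeb eT.
rewrite /pivot.
case: (eqVneq e' e) => [He|He] /=.
  subst e'.
  case: (boolP (e \in L)) => eL /=.
    have the : th e = 1.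
      by rewrite thE /sg eL (chi_f R hT eT) chieb mulr0 subr0 mul1r.
    have x'e : x' e = (cap G e)%:R by rewrite /x' xpos // the ltr01.
    apply: fin.
      apply: bs_intro => //; move=> g; rewrite !inE.
      have [->|ge] := eqVneq g e.
        by rewrite ?eqxx eL (negbTE eT) (negbTE (dLU _ eL)) (negbTE eeb).
      by rewrite /=; exact: cnt g.
    split => // g; rewrite !inE.
      move=> /andP[ge gL]; rewrite x'z ?Lx //; [exact: dLT | exact: gLeb].
    case/orP => [/eqP -> //| gU]; rewrite x'z ?Ux //; first exact: dUT.
      by apply: contraTneq gU => ->; exact: dLU _ eL.
    exact: gUeb.
  have eU : e \in U by move: eLU; rewrite (negbTE eL).
  have the : th e = -1.
    by rewrite thE /sg (negbTE eL) (chi_f R hT eT) chieb mulr0 subr0 mulN1r.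
  have x'e : x' e = 0 by rewrite /x' xneg // the ltrN10.
  apply: fin.
    apply: bs_intro => //; move=> g; rewrite !inE.
    have [->|ge] := eqVneq g e.
      by rewrite ?eqxx eU (negbTE eT) (negbTE eL) (negbTE eeb).
    by rewrite /=; exact: cnt g.
  split => // g; rewrite !inE.
    case/orP => [/eqP -> //| gL]; rewrite x'z ?Lx //; first exact: dLT.
      by apply: contraTneq gL => ->.
    exact: gLeb.
  move=> /andP[ge gU]; rewrite x'z ?Ux //; [exact: dUT | exact: gUeb].
case: (eqVneq e' eb) => [Heb|Heb] /=.
  subst e'.
  have chie_eb : chi R G T e eb = 0.
    by rewrite (chi_out R hT eT) // !inE negb_or eq_sym eeb ebT.
  have benz : be != 0.
    move: thne; rewrite thE chie_eb (chi_f R hT ebT) mulr1 sub0r.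
    by apply: contraNneq => ->; rewrite mul0r oppr0 mulr0.
  have ebe : (eb == e) = false by apply/negbTE; rewrite eq_sym.
  have cntB g : g != e -> g != eb ->
      ((g \in L) + (g \in T) + (g \in U))%N = 1%N.
    by move=> ge geb; move: (cnt g); rewrite (negbTE geb) addn0.
  case: (eqVneq (x' eb) 0) => [hz|hz] /=.
    apply: fin.
      apply: bs_intro => // g; rewrite !inE.
      have [->|ge] := eqVneq g e; first by rewrite ?eqxx (negbTE eeb) (negbTE eT).
      have [->|geb] := eqVneq g eb.
        by rewrite ?eqxx ?ebe (negbTE ebT) (negbTE ebU).
      by rewrite /= addn0 cntB.
    split => // g; rewrite !inE.
      case/orP => [/eqP -> //| /andP[ge gL]]; rewrite x'z ?Lx //; [exact: dLT | exact: gLeb].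
    move=> /andP[ge gU]; rewrite x'z ?Ux //; [exact: dUT | exact: gUeb].
  apply: fin.
    apply: bs_intro => // g; rewrite !inE.
    have [->|ge] := eqVneq g e; first by rewrite ?eqxx (negbTE eeb) (negbTE eT).
    have [->|geb] := eqVneq g eb.
      by rewrite ?eqxx ?ebe (negbTE ebT) (negbTE ebL).
    by rewrite /= addn0 cntB.
  split => // g; rewrite !inE.
    move=> /andP[ge gL]; rewrite x'z ?Lx //; [exact: dLT | exact: gLeb].
  case/orP => [/eqP -> | /andP[ge gU]]; first exact: x'e'01.
  rewrite x'z ?Ux //; [exact: dUT | exact: gUeb].
have e'T : e' \in T.
  by apply/negPn/negP => e'T; move: thne; rewrite thz // eqxx.
have e'Lf : (e' \in L) = false by apply/negP => /dLT; rewrite e'T.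
have e'Uf : (e' \in U) = false by apply/negP => H; move: (dTU _ e'T); rewrite H.
have eTf : (e \in T) = false by apply/negbTE.
have ebTf : (e \in T) = false by apply/negbTE.
have rules := (negbTE eT, negbTE ebT, negbTE ebL, negbTE ebU, e'Lf, e'Uf, e'T,
  negbTE He, negbTE Heb, negbTE eeb, (eq_sym e e'), (eq_sym eb e'), (eq_sym eb e)).
have cntC g : g != eb -> ((g \in L) + (g \in T) + (g \in U))%N = 1%N.
  by move=> geb; move: (cnt g); rewrite (negbTE geb) addn0.
have basicC : is_basic G (if x' e' == 0 then e' |: L :\ e else L :\ e)
    (if x' e' == 0 then U :\ e else e' |: U :\ e) x'.
  split => // g; case: (eqVneq (x' e') 0) => hz /=; rewrite !inE.
  - case/orP => [/eqP -> //| /andP[ge gL]]; rewrite x'z ?Lx //; [exact: dLT | exact: gLeb].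
  - move=> /andP[ge gL]; rewrite x'z ?Lx //; [exact: dLT | exact: gLeb].
  - move=> /andP[ge gU]; rewrite x'z ?Ux //; [exact: dUT | exact: gUeb].
  - case/orP => [/eqP -> | /andP[ge gU]]; first exact: x'e'01.
    rewrite x'z ?Ux //; [exact: dUT | exact: gUeb].
case: ifP => hsp.
  have [h1 h2] := bcyc_exch R hT eT ebT eeb e'T hsp.
  move: h1 h2; set al := chi R G ((e |: T) :\ e') eb e => h1 h2.
  have bnz : bcyc R G ((e |: T) :\ e') eb != 0.
    rewrite h2; apply/eqP => H0; move: thne; rewrite thE.
    have hc : chi R G T eb e' = - (al * chi R G T e e').
      by apply/eqP; rewrite -addr_eq0 addrC h1.
    have : chi R G T e e' - be / bb * chi R G T eb e' = 0.
      apply: (mulIf hbeb); rewrite mul0r hc.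
      have -> : (chi R G T e e' - be / bb * - (al * chi R G T e e')) * bb
          = chi R G T e e' * (al * be + bb) by field.
      by rewrite H0 mulr0.
    by move=> ->; rewrite mulr0 eqxx.
  apply: fin => //.
  apply: bs_intro => // g; case: (eqVneq (x' e') 0) => hz /=; rewrite !inE.
  - have [->|ge] := eqVneq g e; first by rewrite ?eqxx ?rules.
    have [->|ge'] := eqVneq g e'; first by rewrite ?eqxx ?rules.
    have [->|geb] := eqVneq g eb; first by rewrite ?eqxx ?rules.
    by rewrite /= ?andbT cntC.
  - have [->|ge] := eqVneq g e; first by rewrite ?eqxx ?rules.
    have [->|ge'] := eqVneq g e'; first by rewrite ?eqxx ?rules.
    have [->|geb] := eqVneq g eb; first by rewrite ?eqxx ?rules.
    by rewrite /= ?andbT cntC.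
have ce' : chi R G T e e' = 0.
  apply: (contraFeq _ hsp) => H; exact: exchange hT eT e'T H.
have cb : chi R G T eb e' != 0.
  by move: thne; rewrite thE ce' sub0r; apply: contraNneq => ->; rewrite mulr0 oppr0 mulr0.
have benz : be != 0.
  by move: thne; rewrite thE ce' sub0r; apply: contraNneq => ->; rewrite mul0r mul0r oppr0 mulr0.
have hsp2 := exchange hT ebT e'T cb.
have ebe : eb != e by rewrite eq_sym.
have [h1 h2] := bcyc_exch R hT ebT eT ebe e'T hsp2.
move: h1 h2; set al := chi R G ((eb |: T) :\ e') e eb => h1 h2.
have al0 : al = 0.
  by move: h1; rewrite ce' addr0 => /eqP; rewrite mulf_eq0 (negbTE cb) orbF => /eqP.
have bnz : bcyc R G ((eb |: T) :\ e') e != 0 by rewrite h2 al0 mul0r add0r.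
apply: fin => //.
apply: bs_intro => // g; case: (eqVneq (x' e') 0) => hz /=; rewrite !inE.
- have [->|ge] := eqVneq g e; first by rewrite ?eqxx ?rules.
  have [->|ge'] := eqVneq g e'; first by rewrite ?eqxx ?rules.
  have [->|geb] := eqVneq g eb; first by rewrite ?eqxx ?rules.
  by rewrite /= ?andbT ?addn0 cntC.
- have [->|ge] := eqVneq g e; first by rewrite ?eqxx ?rules.
  have [->|ge'] := eqVneq g e'; first by rewrite ?eqxx ?rules.
  have [->|geb] := eqVneq g eb; first by rewrite ?eqxx ?rules.
  by rewrite /= ?andbT ?addn0 cntC.
Qed.
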